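(* Let $\alpha,\gamma,\mu,\delta,\rho>0$, $\beta=\alpha+\gamma$, and consider \[ \dot P=P\big[(\beta-\mu)-2\beta P+(\delta-\beta)A\big],\qquad \dot A=-(2\delta P+\rho)A \] on $\mathcal F=\{(P,A): P\ge0,\ A\ge0,\ 2P+A\le1\}$. (i) If $\beta\le\mu$, then $E_0=(0,0)$ is globally asymptotically stable on $\mathcal F$: $P(t)\to0$ and $A(t)\to0$ for all initial conditions in $\mathcal F$. (ii) If $\beta>\mu$, then the edge $\{P=0\}$ is forward invariant; every initial condition with $P_0=0$ gives $P(t)\equiv0$, $A(t)\to0$, so the trajectory converges to $E_0$; every initial condition in $\mathcal F$ with $P_0>0$ converges to $E_1=\big(\tfrac12(1-\mu/\beta),0\big)$. In this regime $E_0$ is a saddle and $E_1$ is locally asymptotically stable. *)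

(* Defs.v *)
From Stdlib Require Import Reals Lra.
From Coquelicot Require Import Coquelicot.
Open Scope R_scope.

Definition fP (beta mu delta : R) (p a : R) : R :=
  p * ((beta - mu) - 2 * beta * p + (delta - beta) * a).
Definition fA (delta rho : R) (p a : R) : R :=
  - (2 * delta * p + rho) * a.

Definition in_F (p a : R) : Prop := 0 <= p /\ 0 <= a /\ 2 * p + a <= 1.

Definition is_solution (beta mu delta rho : R) (P A : R -> R) : Prop :=
  forall t, 0 <= t ->
    is_derive P t (fP beta mu delta (P t) (A t)) /\
    is_derive A t (fA delta rho (P t) (A t)).

Definition dist2 (p a q b : R) : R := sqrt ((p - q) ^ 2 + (a - b) ^ 2).

Definition jac11 (f1 : R -> R -> R) p0 a0 := Derive (fun p => f1 p a0) p0.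
Definition jac12 (f1 : R -> R -> R) p0 a0 := Derive (fun a => f1 p0 a) a0.

Definition is_eigenvalue2 (j11 j12 j21 j22 lam : R) : Prop :=
  exists v1 v2 : R, (v1 <> 0 \/ v2 <> 0) /\
    j11 * v1 + j12 * v2 = lam * v1 /\ j21 * v1 + j22 * v2 = lam * v2.

Definition is_saddle (f1 f2 : R -> R -> R) (p0 a0 : R) : Prop :=
  f1 p0 a0 = 0 /\ f2 p0 a0 = 0 /\
  exists l1 l2, 0 < l1 /\ l2 < 0 /\
    is_eigenvalue2 (jac11 f1 p0 a0) (jac12 f1 p0 a0)
                   (jac11 f2 p0 a0) (jac12 f2 p0 a0) l1 /\
    is_eigenvalue2 (jac11 f1 p0 a0) (jac12 f1 p0 a0)
                   (jac11 f2 p0 a0) (jac12 f2 p0 a0) l2.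

Definition lyap_stable (beta mu delta rho : R) (p0 a0 : R) : Prop :=
  forall eps, 0 < eps -> exists d, 0 < d /\
     forall P A, is_solution beta mu delta rho P A -> in_F (P 0) (A 0) ->
       dist2 (P 0) (A 0) p0 a0 < d ->
       forall t, 0 <= t -> dist2 (P t) (A t) p0 a0 < eps.

Definition loc_asymp_stable (beta mu delta rho : R) (p0 a0 : R) : Prop :=
  lyap_stable beta mu delta rho p0 a0 /\
  (exists eta, 0 < eta /\
     forall P A, is_solution beta mu delta rho P A -> in_F (P 0) (A 0) ->
       dist2 (P 0) (A 0) p0 a0 < eta ->
       is_lim P p_infty p0 /\ is_lim A p_infty a0).

Definition glob_asymp_stable (beta mu delta rho : R) (p0 a0 : R) : Prop :=
  lyap_stable beta mu delta rho p0 a0 /\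
  (forall P A, is_solution beta mu delta rho P A -> in_F (P 0) (A 0) ->
       is_lim P p_infty p0 /\ is_lim A p_infty a0).

(* Main.v *)
Require Import Defs.
From Stdlib Require Import Reals Lra Psatz.
From Coquelicot Require Import Coquelicot.
Open Scope R_scope.

Lemma D_eq (f : R -> R) (x a b : R) : is_derive f x a -> a = b -> is_derive f x b.
Proof. intros H ->; exact H. Qed.
Lemma D_plus (f g : R -> R) (x a b : R) : is_derive f x a -> is_derive g x b ->
  is_derive (fun t => f t + g t) x (a + b).
Proof. intros; apply (is_derive_plus f g); auto. Qed.
Lemma D_mult (f g : R -> R) (x a b : R) : is_derive f x a -> is_derive g x b ->
  is_derive (fun t => f t * g t) x (a * g x + f x * b).
Proof. intros; apply (is_derive_mult f g); auto. intros; apply Rmult_comm. Qed.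
Lemma D_const (c x : R) : is_derive (fun _ => c) x 0.
Proof. apply (is_derive_const c x). Qed.
Lemma D_id (x : R) : is_derive (fun t => t) x 1.
Proof. apply (is_derive_id x). Qed.
Lemma D_exp (f : R -> R) (x a : R) : is_derive f x a -> is_derive (fun t => exp (f t)) x (a * exp (f x)).
Proof. intros H. apply (is_derive_comp exp f x (exp (f x)) a); auto. apply is_derive_exp. Qed.
Lemma D_inv (f : R -> R) (x a : R) : is_derive f x a -> f x <> 0 -> is_derive (fun t => / f t) x (- a / f x ^ 2).
Proof. intros; apply is_derive_inv; auto. Qed.

Lemma D_cont (f : R -> R) (x a : R) : is_derive f x a -> continuous f x.
Proof. intros H. apply (ex_derive_continuous (K:=R_AbsRing) (V:=R_NormedModule)). exists a; exact H. Qed.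

Lemma mono_le (f df : R -> R) (a b : R) : a <= b ->
  (forall x, a <= x <= b -> is_derive f x (df x)) ->
  (forall x, a <= x <= b -> df x <= 0) -> f b <= f a.
Proof.
  intros Hab Hd Hn.
  destruct (MVT_gen f a b df) as [c [Hc Heq]].
  - intros x Hx. rewrite Rmin_left in Hx by lra. rewrite Rmax_right in Hx by lra.
    apply Hd; lra.
  - intros x Hx. rewrite Rmin_left in Hx by lra. rewrite Rmax_right in Hx by lra.
    apply continuity_pt_filterlim. apply (D_cont f x (df x)). apply Hd; lra.
  - rewrite Rmin_left in Hc by lra. rewrite Rmax_right in Hc by lra.
    assert (df c <= 0) by (apply Hn; lra). nra.
Qed.

Lemma cont_rmax0 x : continuous (fun t => Rmax t 0) x.
Proof.
  apply continuity_pt_filterlim.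
  apply continuity_pt_ext with (f := fun t => (t + Rabs t) / 2).
  - intros t. unfold Rmax. destruct (Rle_dec t 0).
    + rewrite Rabs_left1 by lra. lra.
    + rewrite Rabs_right by lra. lra.
  - apply continuity_pt_div. apply continuity_pt_plus. apply continuity_pt_id.
    apply Rcontinuity_abs.
    apply continuity_pt_const. intros u v; reflexivity. lra.
Qed.

Lemma antideriv (h : R -> R) : (forall t, 0 <= t -> continuous h t) ->
  exists H, forall t, 0 <= t -> is_derive H t (h t).
Proof.
  intros Hc.
  set (h' := fun t => h (Rmax t 0)).
  assert (Hc' : forall t, continuous h' t).
  { intros t. unfold h'. apply (continuous_comp (fun t => Rmax t 0) h).
    apply cont_rmax0. apply Hc. apply Rmax_r. }
  exists (fun t => RInt h' 0 t). intros t Ht.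
  apply D_eq with (h' t).
  - apply (is_derive_RInt h' (fun t => RInt h' 0 t) 0 t).
    + apply filter_forall. intros b. apply (RInt_correct h'). apply (ex_RInt_continuous h').
      intros; apply Hc'.
    + apply Hc'.
  - unfold h'. rewrite Rmax_left by lra. reflexivity.
Qed.

Lemma G3 (y dy g G : R -> R) (T : R) :
  (forall t, T <= t -> is_derive y t (dy t)) ->
  (forall t, T <= t -> is_derive G t (g t)) ->
  (forall t, T <= t -> dy t <= g t * y t) ->
  forall t, T <= t -> y t <= y T * exp (G t - G T).
Proof.
  intros Hy HG Hi t Ht.
  set (z := fun s => y s * exp (- G s)).
  assert (Hz : z t <= z T).
  { apply (mono_le z (fun s => exp (- G s) * (dy s - g s * y s)) T t Ht).
    - intros x Hx. unfold z. eapply D_eq.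
      apply D_mult. apply Hy; lra. apply D_exp.
      apply (is_derive_opp G x (g x)). apply HG; lra.
      simpl. unfold opp; simpl. ring.
    - intros x Hx. assert (0 < exp (- G x)) by apply exp_pos.
      assert (dy x - g x * y x <= 0) by (assert (h := Hi x); lra). nra. }
  unfold z in Hz.
  replace (y t) with (y t * exp (- G t) * exp (G t)).
  2:{ rewrite Rmult_assoc, <- exp_plus. replace (- G t + G t) with 0 by ring. rewrite exp_0; ring. }
  replace (y T * exp (G t - G T)) with (y T * exp (- G T) * exp (G t)).
  2:{ rewrite Rmult_assoc, <- exp_plus. f_equal. f_equal. ring. }
  apply Rmult_le_compat_r. left; apply exp_pos. exact Hz.
Qed.

Lemma cont_lin (P A : R -> R) (c1 c2 c3 t : R) : continuous P t -> continuous A t ->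
  continuous (fun s => c1 + c2 * P s + c3 * A s) t.
Proof.
  intros HP HA. apply continuity_pt_filterlim.
  apply continuity_pt_filterlim in HP. apply continuity_pt_filterlim in HA.
  apply continuity_pt_plus. apply continuity_pt_plus. apply continuity_pt_const; intros u v; reflexivity.
  apply continuity_pt_mult. apply continuity_pt_const; intros u v; reflexivity. exact HP.
  apply continuity_pt_mult. apply continuity_pt_const; intros u v; reflexivity. exact HA.
Qed.

Lemma lin_exact (y g G : R -> R) :
  (forall t, 0 <= t -> is_derive y t (g t * y t)) ->
  (forall t, 0 <= t -> is_derive G t (g t)) ->
  forall t, 0 <= t -> y t = y 0 * exp (G t - G 0).
Proof.
  intros Hy HG t Ht.
  assert (H1 := G3 y (fun s => g s * y s) g G 0 Hy HG ltac:(intros; lra) t Ht).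
  assert (H2 := G3 (fun s => - y s) (fun s => - (g s * y s)) g G 0).
  assert (H2' : - y t <= - y 0 * exp (G t - G 0)).
  { apply H2; auto. intros s Hs. eapply D_eq. apply (is_derive_opp y s). apply Hy; auto.
    reflexivity. intros; lra. }
  lra.
Qed.



Lemma basic (beta mu delta rho : R) (Hb : 0 < beta) (Hm : 0 < mu) (Hd : 0 < delta) (Hr : 0 < rho) (P A : R -> R) : is_solution beta mu delta rho P A -> in_F (P 0) (A 0) ->
  forall t, 0 <= t ->
   0 <= P t /\ 0 <= A t /\ 2 * P t + A t <= 1 /\ A t <= A 0 * exp (- rho * t) /\
   (P 0 = 0 -> P t = 0) /\ (0 < P 0 -> 0 < P t).
Proof.
  intros Hsol [HP0 [HA0 HS0]].
  assert (CP : forall t, 0 <= t -> continuous P t).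
  { intros t Ht. apply (D_cont P t _ (proj1 (Hsol t Ht))). }
  assert (CA : forall t, 0 <= t -> continuous A t).
  { intros t Ht. apply (D_cont A t _ (proj2 (Hsol t Ht))). }
  set (gP := fun s => (beta - mu) + (- 2 * beta) * P s + (delta - beta) * A s).
  destruct (antideriv gP) as [GP HGP].
  { intros t Ht. apply cont_lin; auto. }
  assert (RP : forall t, 0 <= t -> P t = P 0 * exp (GP t - GP 0)).
  { apply lin_exact with gP; auto. intros t Ht. eapply D_eq. apply (proj1 (Hsol t Ht)).
    unfold fP, gP. ring. }
  set (gA := fun s => (- rho) + (- 2 * delta) * P s + 0 * A s).
  destruct (antideriv gA) as [GA HGA].
  { intros t Ht. apply cont_lin; auto. }
  assert (RA : forall t, 0 <= t -> A t = A 0 * exp (GA t - GA 0)).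
  { apply lin_exact with gA; auto. intros t Ht. eapply D_eq. apply (proj2 (Hsol t Ht)).
    unfold fA, gA. ring. }
  assert (Pp : forall t, 0 <= t -> 0 <= P t).
  { intros t Ht. rewrite RP by auto. assert (h := exp_pos (GP t - GP 0)). nra. }
  assert (Ap : forall t, 0 <= t -> 0 <= A t).
  { intros t Ht. rewrite RA by auto. assert (h := exp_pos (GA t - GA 0)). nra. }
  assert (Adec : forall t, 0 <= t -> A t <= A 0 * exp (- rho * t)).
  { intros t Ht.
    assert (h := G3 A (fun s => fA delta rho (P s) (A s)) (fun _ => - rho) (fun s => - rho * s) 0
               (fun s Hs => proj2 (Hsol s Hs))).
    replace (- rho * t) with (- rho * t - - rho * 0) by ring. apply h; auto.
    - intros s _. eapply D_eq. apply (is_derive_scal (fun s => s) s (- rho) 1 (D_id s)). ring.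
    - intros s Hs. unfold fA. assert (h1 := Pp s Hs). assert (h2 := Ap s Hs).
      assert (0 <= delta * P s * A s) by (apply Rmult_le_pos; [apply Rmult_le_pos|]; lra). nra. }
  assert (Sle : forall t, 0 <= t -> 2 * P t + A t - 1 <= 0).
  { set (gS := fun s => 0 + (- 2 * beta) * P s + 0 * A s).
    destruct (antideriv gS) as [GS HGS].
    { intros t Ht. apply cont_lin; auto. }
    intros t Ht.
    assert (h := G3 (fun s => 2 * P s + A s - 1)
       (fun s => 2 * fP beta mu delta (P s) (A s) + fA delta rho (P s) (A s)) gS GS 0).
    assert (h' : 2 * P t + A t - 1 <= (2 * P 0 + A 0 - 1) * exp (GS t - GS 0)).
    { apply h; auto.
      - intros s Hs. eapply D_eq. apply D_plus. apply D_plus.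
        apply (is_derive_scal P s 2 _ (proj1 (Hsol s Hs))). apply (proj2 (Hsol s Hs)).
        apply D_const. ring.
      - intros s Hs. unfold gS, fP, fA. assert (h1 := Pp s Hs). assert (h2 := Ap s Hs).
        assert (0 <= mu * P s) by (apply Rmult_le_pos; lra).
        assert (0 <= rho * A s) by (apply Rmult_le_pos; lra).
        match goal with |- ?l <= ?r => assert (l - r = - 2 * mu * P s - rho * A s) by ring end.
        lra. }
    assert (h3 := exp_pos (GS t - GS 0)). nra. }
  intros t Ht. repeat split; auto.
  - assert (h := Sle t Ht); lra.
  - intros E. rewrite RP, E by auto. ring.
  - intros E. rewrite RP by auto. assert (h := exp_pos (GP t - GP 0)). nra.
Qed.

Lemma expdecay C lam eps : 0 < lam -> 0 < eps ->
  exists T, forall t, T <= t -> C * exp (- lam * t) < eps.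
Proof.
  intros Hl He. exists (Rabs C / (lam * eps) + 1). intros t Ht.
  assert (H0 : 0 <= Rabs C / (lam * eps)).
  { apply Rmult_le_pos. apply Rabs_pos. left; apply Rinv_0_lt_compat; nra. }
  assert (Htp : 0 < t) by lra.
  assert (Hx := exp_ineq1 (lam * t) ltac:(nra)).
  assert (Hinv : exp (- lam * t) = / exp (lam * t)).
  { replace (- lam * t) with (- (lam * t)) by ring. apply exp_Ropp. }
  assert (Hep := exp_pos (lam * t)).
  assert (C * exp (- lam * t) <= Rabs C * exp (- lam * t)).
  { apply Rmult_le_compat_r. left; apply exp_pos. apply RRle_abs. }
  assert (Rabs C * exp (- lam * t) < eps).
  { rewrite Hinv. apply Rmult_lt_reg_r with (exp (lam * t)); auto.
    rewrite Rmult_assoc, Rinv_l by lra. rewrite Rmult_1_r.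
    assert (Rabs C < eps * (lam * t)).
    { assert (HH : Rabs C / (lam * eps) < t) by lra.
      apply Rmult_lt_compat_r with (r := lam * eps) in HH; [|nra].
      unfold Rdiv in HH. rewrite Rmult_assoc, Rinv_l in HH by nra. nra. }
    nra. }
  lra.
Qed.

Lemma lim_of (f : R -> R) (l : R) :
  (forall eps, 0 < eps -> exists T, forall t, T <= t -> Rabs (f t - l) < eps) ->
  is_lim f p_infty l.
Proof.
  intros H. apply is_lim_spec. intros eps. destruct (H eps (cond_pos eps)) as [T HT].
  exists T. intros x Hx. apply HT. lra.
Qed.


Lemma A_small (beta mu delta rho : R) (Hb : 0 < beta) (Hm : 0 < mu) (Hd : 0 < delta) (Hr : 0 < rho) (P A : R -> R) : is_solution beta mu delta rho P A -> in_F (P 0) (A 0) ->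
  forall eps, 0 < eps -> exists T, 0 <= T /\ forall t, T <= t -> A t < eps.
Proof.
  intros Hs HF eps He. destruct (expdecay 1 rho eps Hr He) as [T HT].
  exists (Rmax T 0). split. apply Rmax_r. intros t Ht.
  assert (H1 := Rmax_l T 0). assert (H2 := Rmax_r T 0).
  destruct (basic beta mu delta rho Hb Hm Hd Hr P A Hs HF t ltac:(lra)) as [_ [_ [_ [h _]]]].
  destruct HF as [h1 [h2 h3]].
  assert (HT' := HT t ltac:(lra)).
  assert (A 0 * exp (- rho * t) <= 1 * exp (- rho * t)).
  { apply Rmult_le_compat_r. left; apply exp_pos. lra. }
  lra.
Qed.

Lemma A_lim (beta mu delta rho : R) (Hb : 0 < beta) (Hm : 0 < mu) (Hd : 0 < delta) (Hr : 0 < rho) (P A : R -> R) : is_solution beta mu delta rho P A -> in_F (P 0) (A 0) ->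
  is_lim A p_infty 0.
Proof.
  intros Hs HF. apply lim_of. intros eps He.
  destruct (A_small beta mu delta rho Hb Hm Hd Hr P A Hs HF eps He) as [T [HT0 HT]]. exists T. intros t Ht.
  destruct (basic beta mu delta rho Hb Hm Hd Hr P A Hs HF t ltac:(lra)) as [_ [h _]].
  rewrite Rminus_0_r, Rabs_right by lra. auto.
Qed.


Lemma exp_ge1 x : 0 <= x -> 1 <= exp x.
Proof. intros H. destruct (Req_dec x 0) as [->|n]. rewrite exp_0; lra. left. assert (h:=exp_ineq1 x n). lra. Qed.

Lemma D_minus (f g : R -> R) (x a b : R) : is_derive f x a -> is_derive g x b ->
  is_derive (fun t => f t - g t) x (a - b).
Proof. intros; apply (is_derive_minus f g); auto. Qed.


Lemma P_bound_i (beta mu delta rho : R) (Hb : 0 < beta) (Hm : 0 < mu) (Hd : 0 < delta) (Hr : 0 < rho) (P A : R -> R) : beta <= mu -> is_solution beta mu delta rho P A -> in_F (P 0) (A 0) ->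
  forall t, 0 <= t -> P t <= P 0 * exp ((Rabs (delta - beta) / rho) * A 0).
Proof.
  intros Hk Hs HF t Ht. set (L := Rabs (delta - beta)).
  assert (HB := basic beta mu delta rho Hb Hm Hd Hr P A Hs HF).
  assert (h := G3 (fun s => P s * exp ((L / rho) * A s))
     (fun s => fP beta mu delta (P s) (A s) * exp ((L / rho) * A s) +
               P s * ((L / rho) * fA delta rho (P s) (A s) * exp ((L / rho) * A s)))
     (fun _ => 0) (fun _ => 0) 0).
  assert (h' : P t * exp ((L / rho) * A t) <= P 0 * exp ((L / rho) * A 0) * exp (0 - 0)).
  { apply h; auto.
    - intros s Hs0. eapply D_eq. apply D_mult. apply (proj1 (Hs s Hs0)).
      apply (D_exp (fun s => L / rho * A s)).
      apply (is_derive_scal A s (L / rho)). apply (proj2 (Hs s Hs0)). simpl. ring.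
    - intros s _. apply D_const.
    - intros s Hs0. destruct (HB s Hs0) as [p0 [a0 _]].
      assert (he := exp_pos ((L / rho) * A s)).
      assert (hL : delta - beta <= L) by apply RRle_abs.
      assert (hL0 : 0 <= L) by apply Rabs_pos.
      assert (hq : 0 <= L / rho) by (apply Rmult_le_pos; [lra| left; apply Rinv_0_lt_compat; lra]).
      assert (hLr : L / rho * rho = L) by (field; lra).
      unfold fP, fA.
      set (p := P s) in *. set (a := A s) in *. set (e := exp (L / rho * a)) in *.
      assert (E : p * (beta - mu - 2 * beta * p + (delta - beta) * a) * e +
        p * (L / rho * (- (2 * delta * p + rho) * a) * e) =
        e * p * ((beta - mu) - 2 * beta * p + ((delta - beta) * a - (L / rho * rho) * a) - (L / rho) * 2 * delta * p * a))
        by ring. rewrite hLr in E.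
      rewrite E. ring_simplify (0 * (p * e)).
      assert (0 <= e * p) by nra.
      assert (0 <= (L / rho) * 2 * delta * p * a).
      { apply Rmult_le_pos; [|lra]. apply Rmult_le_pos; [|lra]. apply Rmult_le_pos; [|lra]. apply Rmult_le_pos; lra. }
      assert (((delta - beta) - L) * a <= 0) by nra.
      assert (0 <= beta * p) by nra.
      assert ((beta - mu) - 2 * beta * p + ((delta - beta) * a - L * a) - (L / rho) * 2 * delta * p * a <= 0) by nra.
      nra. }
  rewrite Rminus_0_r, exp_0, Rmult_1_r in h'.
  destruct (HB t Ht) as [p0 [a0 _]].
  assert (1 <= exp ((L / rho) * A t)).
  { apply exp_ge1. apply Rmult_le_pos; auto. apply Rmult_le_pos. apply Rabs_pos. left; apply Rinv_0_lt_compat; lra. }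
  fold L. nra.
Qed.

Lemma P_lim_i (beta mu delta rho : R) (Hb : 0 < beta) (Hm : 0 < mu) (Hd : 0 < delta) (Hr : 0 < rho) (P A : R -> R) : beta <= mu -> is_solution beta mu delta rho P A -> in_F (P 0) (A 0) ->
  is_lim P p_infty 0.
Proof.
  intros Hk Hs HF. assert (HB := basic beta mu delta rho Hb Hm Hd Hr P A Hs HF).
  apply lim_of. intros eps He.
  destruct (Req_dec (P 0) 0) as [E|NE].
  { exists 0. intros t Ht. destruct (HB t Ht) as [_ [_ [_ [_ [h _]]]]]. rewrite (h E).
    rewrite Rminus_0_r, Rabs_R0. lra. }
  assert (P0p : 0 < P 0) by (destruct HF as [h _]; lra).
  set (L := Rabs (delta - beta)).
  assert (hL : delta - beta <= L) by apply RRle_abs.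
  assert (hL0 : 0 <= L) by apply Rabs_pos.
  set (ep := beta * eps / 2).
  assert (Hep : 0 < ep) by (unfold ep; nra).
  destruct (A_small beta mu delta rho Hb Hm Hd Hr P A Hs HF (ep / (L + 1))) as [T1 [HT10 HT1]].
  { apply Rdiv_lt_0_compat; lra. }
  assert (Hc : forall t, T1 <= t -> (beta - mu) + (delta - beta) * A t <= ep).
  { intros t Ht. assert (h1 := HT1 t Ht). destruct (HB t ltac:(lra)) as [_ [a0 _]].
    assert (A t * (L + 1) < ep) by (apply Rmult_lt_reg_r with (/ (L + 1));
      [apply Rinv_0_lt_compat; lra | rewrite Rmult_assoc, Rinv_r, Rmult_1_r by lra; exact h1]).
    nra. }
  assert (h := G3 (fun s => 2 * beta / ep - / P s)
      (fun s => 0 - (- fP beta mu delta (P s) (A s) / P s ^ 2))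
      (fun _ => - ep) (fun s => - ep * s) T1).
  assert (Hy : forall t, T1 <= t -> 2 * beta / ep - / P t <= (2 * beta / ep - / P T1) * exp (- ep * t - - ep * T1)).
  { apply h.
    - intros s Hs0. destruct (HB s ltac:(lra)) as [_ [_ [_ [_ [_ hp]]]]].
      apply D_minus. apply D_const. apply D_inv. apply (proj1 (Hs s ltac:(lra))).
      specialize (hp P0p). lra.
    - intros s _. eapply D_eq. apply (is_derive_scal (fun s => s) s (- ep) 1 (D_id s)). ring.
    - intros s Hs0. destruct (HB s ltac:(lra)) as [_ [_ [_ [_ [_ hp]]]]]. specialize (hp P0p).
      assert (E1 : 0 - (- fP beta mu delta (P s) (A s) / P s ^ 2) =
                   - 2 * beta + ((beta - mu) + (delta - beta) * A s) / P s)
        by (unfold fP; field; lra).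
      assert (E2 : - ep * (2 * beta / ep - / P s) = - 2 * beta + ep / P s) by (field; lra).
      rewrite E1, E2. apply Rplus_le_compat_l. unfold Rdiv. apply Rmult_le_compat_r.
      left; apply Rinv_0_lt_compat; lra. apply Hc; lra. }
  destruct (expdecay (exp (ep * T1)) ep (1/2) Hep ltac:(lra)) as [T2 HT2].
  exists (Rmax T1 T2). intros t Ht.
  assert (H1 := Rmax_l T1 T2). assert (H2 := Rmax_r T1 T2).
  assert (Hyt := Hy t ltac:(lra)).
  destruct (HB T1 HT10) as [_ [_ [_ [_ [_ hp1]]]]]. specialize (hp1 P0p).
  destruct (HB t ltac:(lra)) as [_ [_ [_ [_ [_ hpt]]]]]. specialize (hpt P0p).
  assert (Ee : exp (- ep * t - - ep * T1) = exp (ep * T1) * exp (- ep * t)).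
  { rewrite <- exp_plus. f_equal. ring. }
  assert (HT2' := HT2 t ltac:(lra)).
  assert (hi1 : 0 < / P T1) by (apply Rinv_0_lt_compat; lra).
  assert (hb : 0 < 2 * beta / ep) by (apply Rdiv_lt_0_compat; lra).
  assert (he := exp_pos (- ep * t - - ep * T1)).
  assert (Hw : 2 * beta / ep - / P t <= 2 * beta / ep * (1 / 2)).
  { rewrite Ee in Hyt, he. nra. }
  assert (Hw' : 2 / eps <= / P t).
  { replace (2 / eps) with (2 * beta / ep * (1/2)) by (unfold ep; field; lra). lra. }
  assert (Pinv : P t * / P t = 1) by (field; lra).
  assert (P t * (2 / eps) <= 1) by nra.
  assert (P t <= eps / 2).
  { replace (P t * (2 / eps)) with (2 * P t / eps) in H by (field; lra).
    apply Rmult_le_compat_r with (r := eps / 2) in H; [|lra].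
    replace (2 * P t / eps * (eps / 2)) with (P t) in H by (field; lra). lra. }
  rewrite Rminus_0_r, Rabs_right by lra. lra.
Qed.

Definition wst (beta mu : R) := 2 * beta / (beta - mu).
Definition ccst beta mu delta := 2 * wst beta mu ^ 2 * (delta - beta) ^ 2 / (beta - mu).
Definition mmst beta mu delta rho := ccst beta mu delta / rho + 1.
Definition lamst beta mu rho := Rmin ((beta - mu) / 2) rho.
Definition Wf beta mu delta rho (P A : R -> R) s :=
  (/ P s - wst beta mu) * (/ P s - wst beta mu) + mmst beta mu delta rho * (A s * A s).


Lemma W_decay (beta mu delta rho : R) (Hb : 0 < beta) (Hm : 0 < mu) (Hd : 0 < delta) (Hr : 0 < rho) (P A : R -> R) : mu < beta -> is_solution beta mu delta rho P A -> in_F (P 0) (A 0) ->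
  0 < P 0 -> forall T1, 0 <= T1 ->
  (forall t, T1 <= t -> Rabs (delta - beta) * A t <= (beta - mu) / 2) ->
  forall t, T1 <= t -> Wf beta mu delta rho P A t <=
     Wf beta mu delta rho P A T1 * exp (- lamst beta mu rho * t - - lamst beta mu rho * T1).
Proof.
  intros Hk Hs HF P0p T1 HT10 HT1.
  assert (HB := basic beta mu delta rho Hb Hm Hd Hr P A Hs HF).
  set (w := wst beta mu). set (cc := ccst beta mu delta). set (mm := mmst beta mu delta rho).
  set (lam := lamst beta mu rho).
  assert (Hw : 0 < w) by (unfold w, wst; apply Rdiv_lt_0_compat; lra).
  assert (Hcc : 0 <= cc).
  { unfold cc, ccst. fold w. apply Rmult_le_pos. apply Rmult_le_pos. apply Rmult_le_pos. lra.
    apply pow2_ge_0. apply pow2_ge_0. left; apply Rinv_0_lt_compat; lra. }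
  assert (Hmm : mm * rho = cc + rho) by (unfold mm, mmst; fold cc; field; lra).
  assert (Hmm0 : 0 < mm) by (unfold mm, mmst; fold cc; assert (0 <= cc / rho) by (apply Rmult_le_pos; [lra|left; apply Rinv_0_lt_compat; lra]); lra).
  assert (Hl1 : lam <= (beta - mu) / 2) by apply Rmin_l.
  assert (Hl2 : lam <= rho) by apply Rmin_r.
  assert (Hl0 : 0 < lam) by (unfold lam, lamst; apply Rmin_glb_lt; lra).
  apply (G3 (Wf beta mu delta rho P A)
     (fun s => ((- fP beta mu delta (P s) (A s) / P s ^ 2 - 0) * (/ P s - w) +
                (/ P s - w) * (- fP beta mu delta (P s) (A s) / P s ^ 2 - 0)) +
               mm * (fA delta rho (P s) (A s) * A s + A s * fA delta rho (P s) (A s)))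
     (fun _ => - lam) (fun s => - lam * s) T1).
  - intros s Hs0. destruct (HB s ltac:(lra)) as [_ [_ [_ [_ [_ hp]]]]]. specialize (hp P0p).
    unfold Wf. fold w mm.
    assert (hX : is_derive (fun s => / P s - w) s (- fP beta mu delta (P s) (A s) / P s ^ 2 - 0)).
    { apply (D_minus (fun s => / P s) (fun _ => w)). apply D_inv. apply (proj1 (Hs s ltac:(lra))). lra.
      apply D_const. }
    apply (D_plus (fun s => (/ P s - w) * (/ P s - w)) (fun s => mm * (A s * A s))).
    + apply (D_mult (fun s => / P s - w) (fun s => / P s - w)); exact hX.
    + apply (is_derive_scal (fun s => A s * A s)). apply (D_mult A A); apply (proj2 (Hs s ltac:(lra))).
  - intros s _. eapply D_eq. apply (is_derive_scal (fun s => s) s (- lam) 1 (D_id s)). ring.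
  - intros s Hs0. destruct (HB s ltac:(lra)) as [p0 [a0 [_ [_ [_ hp]]]]]. specialize (hp P0p).
    assert (hc := HT1 s Hs0). unfold Wf. fold w mm.
    set (p := P s) in *. set (a := A s) in *.
    set (X := / p - w).
    set (k := (beta - mu) + (delta - beta) * a).
    set (Y := (delta - beta) * w * a).
    assert (hk : (beta - mu) / 2 <= k).
    { unfold k. assert (- Rabs (delta - beta) <= delta - beta).
      { rewrite <- Rabs_Ropp. replace (delta - beta) with (- - (delta - beta)) at 2 by ring.
        apply Ropp_le_contravar. apply RRle_abs. }
      nra. }
    assert (EdX : - fP beta mu delta p a / p ^ 2 - 0 = - k * X - Y).
    { unfold fP, k, X, Y, w, wst. field. lra. }
    rewrite EdX. unfold fA.
    assert (s1 : - 2 * k * (X * X) <= - (beta - mu) * (X * X)).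
    { assert (0 <= X * X) by nra. nra. }
    assert (E2 : 2 / (beta - mu) * ((beta - mu) / 2 * X + Y) ^ 2 =
       (beta - mu) / 2 * (X * X) + 2 * X * Y + 2 / (beta - mu) * (Y * Y)) by (field; lra).
    assert (s2 : 0 <= 2 / (beta - mu) * ((beta - mu) / 2 * X + Y) ^ 2).
    { apply Rmult_le_pos. apply Rlt_le, Rdiv_lt_0_compat; lra. apply pow2_ge_0. }
    assert (E3 : 2 / (beta - mu) * (Y * Y) = cc * (a * a)).
    { unfold Y, cc, ccst. fold w. field. lra. }
    assert (s4 : 0 <= delta * p * (a * a)).
    { apply Rmult_le_pos. apply Rmult_le_pos; lra. nra. }
    assert (s5 : 0 <= mm * (delta * p * (a * a))) by (apply Rmult_le_pos; lra).
    assert (s6 : lam * (X * X) <= (beta - mu) / 2 * (X * X)).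
    { apply Rmult_le_compat_r. nra. lra. }
    assert (s7 : lam * mm <= cc + rho).
    { rewrite <- Hmm, (Rmult_comm lam). apply Rmult_le_compat_l; lra. }
    assert (s8 : lam * mm * (a * a) <= (cc + rho) * (a * a)).
    { apply Rmult_le_compat_r. nra. lra. }
    assert (s9 : 0 <= rho * (a * a)) by (apply Rmult_le_pos; nra).
    assert (E4 : (- k * X - Y) * X + X * (- k * X - Y) +
       mm * (- (2 * delta * p + rho) * a * a + a * (- (2 * delta * p + rho) * a)) =
       - 2 * k * (X * X) - 2 * X * Y - 4 * (mm * (delta * p * (a * a))) - 2 * (mm * rho) * (a * a)) by ring.
    rewrite E4, Hmm.
    assert (E5 : - lam * (X * X + mm * (a * a)) = - (lam * (X * X)) - lam * mm * (a * a)) by ring.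
    rewrite E5.
    assert (E6 : (cc + rho) * (a * a) = cc * (a * a) + rho * (a * a)) by ring.
    lra.
Qed.


Lemma small_mul L a c : 0 <= L -> 0 <= a -> 0 < c -> a < c / (L + 1) -> L * a <= c.
Proof.
  intros hL ha hc h.
  assert (a * (L + 1) < c).
  { apply Rmult_lt_reg_r with (/ (L + 1)). apply Rinv_0_lt_compat; lra.
    rewrite Rmult_assoc, Rinv_r, Rmult_1_r by lra. exact h. }
  nra.
Qed.

Lemma close_X p w eps : 0 < p -> p <= 1/2 -> 0 < w -> 0 < eps ->
  (/ p - w) * (/ p - w) < (2 * w * eps) ^ 2 -> Rabs (p - / w) < eps.
Proof.
  intros hp hp2 hw he hX. set (X := / p - w) in *.
  assert (hXa : Rabs X < 2 * w * eps).
  { assert (Rabs X * Rabs X = X * X) by (rewrite <- Rabs_mult; apply Rabs_right; nra).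
    assert (0 <= Rabs X) by apply Rabs_pos.
    destruct (Rlt_or_le (Rabs X) (2 * w * eps)) as [h|h]; auto.
    assert (0 < 2 * w * eps) by nra. nra. }
  replace (p - / w) with (- (p / w) * X) by (unfold X; field; lra).
  rewrite Rabs_mult, Rabs_Ropp, (Rabs_right (p / w)).
  2:{ apply Rle_ge, Rlt_le, Rdiv_lt_0_compat; lra. }
  assert (p / w <= 1 / (2 * w)).
  { unfold Rdiv. rewrite Rmult_1_l. rewrite Rinv_mult.
    apply Rmult_le_compat_r. left; apply Rinv_0_lt_compat; lra. lra. }
  assert (0 <= Rabs X) by apply Rabs_pos.
  assert (p / w * Rabs X <= 1 / (2 * w) * Rabs X) by (apply Rmult_le_compat_r; lra).
  assert (1 / (2 * w) * Rabs X < 1 / (2 * w) * (2 * w * eps)).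
  { apply Rmult_lt_compat_l. apply Rdiv_lt_0_compat; lra. exact hXa. }
  replace (1 / (2 * w) * (2 * w * eps)) with eps in * by (field; lra). lra.
Qed.

Lemma pstar_eq beta mu : 0 < beta -> mu < beta -> (1 - mu / beta) / 2 = / wst beta mu.
Proof. intros. unfold wst. field. lra. Qed.

Lemma dist_comp p a q b d : dist2 p a q b < d -> Rabs (p - q) < d /\ Rabs (a - b) < d.
Proof.
  unfold dist2. intros h. split.
  - rewrite <- sqrt_Rsqr_abs. eapply Rle_lt_trans; [|exact h]. apply sqrt_le_1_alt.
    rewrite Rsqr_pow2. assert (0 <= (a - b) ^ 2) by apply pow2_ge_0. assert (0 <= (p - q) ^ 2) by apply pow2_ge_0. lra.
  - rewrite <- sqrt_Rsqr_abs. eapply Rle_lt_trans; [|exact h]. apply sqrt_le_1_alt.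
    rewrite Rsqr_pow2. assert (0 <= (a - b) ^ 2) by apply pow2_ge_0. assert (0 <= (p - q) ^ 2) by apply pow2_ge_0. lra.
Qed.

Lemma dist_lt p a q b eps : 0 < eps -> (p - q) ^ 2 + (a - b) ^ 2 < eps ^ 2 -> dist2 p a q b < eps.
Proof.
  intros he h. unfold dist2. rewrite <- (sqrt_pow2 eps) by lra.
  apply sqrt_lt_1_alt. split; [|exact h]. assert (0 <= (a - b) ^ 2) by apply pow2_ge_0. assert (0 <= (p - q) ^ 2) by apply pow2_ge_0. lra.
Qed.

Lemma P_lim_ii (beta mu delta rho : R) (Hb : 0 < beta) (Hm : 0 < mu) (Hd : 0 < delta) (Hr : 0 < rho)
  (P A : R -> R) : mu < beta -> is_solution beta mu delta rho P A -> in_F (P 0) (A 0) ->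
  0 < P 0 -> is_lim P p_infty ((1 - mu / beta) / 2).
Proof.
  intros Hk Hs HF P0p. assert (HB := basic beta mu delta rho Hb Hm Hd Hr P A Hs HF).
  set (L := Rabs (delta - beta)). assert (hL0 : 0 <= L) by apply Rabs_pos.
  destruct (A_small beta mu delta rho Hb Hm Hd Hr P A Hs HF (((beta - mu) / 2) / (L + 1))) as [T1 [HT10 HT1]].
  { apply Rdiv_lt_0_compat; lra. }
  assert (Hc : forall t, T1 <= t -> Rabs (delta - beta) * A t <= (beta - mu) / 2).
  { intros t Ht. destruct (HB t ltac:(lra)) as [_ [a0 _]]. apply small_mul; [apply Rabs_pos | exact a0 | lra | apply HT1; exact Ht]. }
  assert (HW := W_decay beta mu delta rho Hb Hm Hd Hr P A Hk Hs HF P0p T1 HT10 Hc).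
  set (lam := lamst beta mu rho) in *.
  set (w := wst beta mu).
  assert (Hw : 0 < w) by (unfold w, wst; apply Rdiv_lt_0_compat; lra).
  assert (Hl0 : 0 < lam) by (unfold lam, lamst; apply Rmin_glb_lt; lra).
  assert (Hmm0 : 0 < mmst beta mu delta rho).
  { unfold mmst, ccst. fold w. assert (0 <= 2 * w ^ 2 * (delta - beta) ^ 2 / (beta - mu) / rho); [|lra].
    apply Rmult_le_pos; [|left; apply Rinv_0_lt_compat; lra].
    apply Rmult_le_pos; [|left; apply Rinv_0_lt_compat; lra].
    apply Rmult_le_pos. apply Rmult_le_pos. lra. apply pow2_ge_0. apply pow2_ge_0. }
  rewrite pstar_eq by lra. fold w.
  apply lim_of. intros eps He.
  destruct (expdecay (Wf beta mu delta rho P A T1 * exp (lam * T1)) lam ((2 * w * eps) ^ 2) Hl0)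
    as [T2 HT2].
  { apply pow_lt. nra. }
  exists (Rmax T1 T2). intros t Ht.
  assert (H1 := Rmax_l T1 T2). assert (H2 := Rmax_r T1 T2).
  destruct (HB t ltac:(lra)) as [p0 [a0 [hS [_ [_ hp]]]]]. specialize (hp P0p).
  apply close_X; auto. lra.
  assert (HWt := HW t ltac:(lra)).
  assert (HT2t := HT2 t ltac:(lra)).
  assert (Ee : exp (- lam * t - - lam * T1) = exp (lam * T1) * exp (- lam * t)).
  { rewrite <- exp_plus. f_equal. ring. }
  rewrite Ee, <- Rmult_assoc in HWt.
  unfold Wf in HWt, HT2t. fold w in HWt, HT2t.
  assert (0 <= mmst beta mu delta rho * (A t * A t)) by (apply Rmult_le_pos; nra).
  lra.
Qed.


Lemma exp_mono x y : x <= y -> exp x <= exp y.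
Proof. intros h. destruct (Rle_lt_or_eq_dec x y h) as [h'|h']. left; apply exp_increasing; auto. rewrite h'; lra. Qed.

Lemma A_le_A0 (beta mu delta rho : R) (Hb : 0 < beta) (Hm : 0 < mu) (Hd : 0 < delta) (Hr : 0 < rho)
  (P A : R -> R) : is_solution beta mu delta rho P A -> in_F (P 0) (A 0) ->
  forall t, 0 <= t -> 0 <= A t <= A 0.
Proof.
  intros Hs HF t Ht. destruct (basic beta mu delta rho Hb Hm Hd Hr P A Hs HF t Ht) as [_ [a0 [_ [h _]]]].
  assert (exp (- rho * t) <= 1) by (rewrite <- exp_0; apply exp_mono; nra).
  destruct HF as [_ [h2 _]]. split; auto. nra.
Qed.

Lemma lyap_E1 (beta mu delta rho : R) (Hb : 0 < beta) (Hm : 0 < mu) (Hd : 0 < delta) (Hr : 0 < rho) :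
  mu < beta -> lyap_stable beta mu delta rho ((1 - mu / beta) / 2) 0.
Proof.
  intros Hk eps He. rewrite pstar_eq by lra.
  set (w := wst beta mu). set (mm := mmst beta mu delta rho).
  assert (Hw : 0 < w) by (unfold w, wst; apply Rdiv_lt_0_compat; lra).
  assert (Hmm0 : 0 < mm).
  { unfold mm, mmst, ccst. fold w. assert (0 <= 2 * w ^ 2 * (delta - beta) ^ 2 / (beta - mu) / rho); [|lra].
    apply Rmult_le_pos; [|left; apply Rinv_0_lt_compat; lra].
    apply Rmult_le_pos; [|left; apply Rinv_0_lt_compat; lra].
    apply Rmult_le_pos. apply Rmult_le_pos. lra. apply pow2_ge_0. apply pow2_ge_0. }
  set (ps := / w). assert (Hps : 0 < ps) by (apply Rinv_0_lt_compat; lra).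
  assert (Hwps : w * ps = 1) by (unfold ps; field; lra).
  set (K := (4 * w ^ 4 + mm) / (4 * w ^ 2)).
  assert (HK : 0 <= K).
  { unfold K. apply Rlt_le, Rdiv_lt_0_compat. assert (0 < w ^ 4) by (apply pow_lt; lra). lra.
    assert (0 < w ^ 2) by (apply pow_lt; lra). lra. }
  set (L := Rabs (delta - beta)). assert (hL0 : 0 <= L) by apply Rabs_pos.
  set (d := Rmin (Rmin (ps / 2) (((beta - mu) / 2) / (L + 1))) (eps / (K + 2))).
  assert (hd1 : d <= ps / 2) by (unfold d; eapply Rle_trans; [apply Rmin_l|apply Rmin_l]).
  assert (hd2 : d <= ((beta - mu) / 2) / (L + 1)) by (unfold d; eapply Rle_trans; [apply Rmin_l|apply Rmin_r]).
  assert (hd3 : d <= eps / (K + 2)) by (unfold d; apply Rmin_r).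
  assert (hd0 : 0 < d).
  { unfold d. apply Rmin_glb_lt. apply Rmin_glb_lt. lra. apply Rdiv_lt_0_compat; lra.
    apply Rdiv_lt_0_compat; lra. }
  exists d. split; auto.
  intros P A Hs HF Hdist t Ht.
  destruct (dist_comp _ _ _ _ _ Hdist) as [hP0 hA0]. rewrite Rminus_0_r in hA0.
  assert (HF' := HF). destruct HF' as [p00 [a00 _]].
  rewrite Rabs_right in hA0 by lra.
  assert (P0p : ps / 2 < P 0) by (apply Rabs_def2 in hP0; lra).
  assert (hAA := A_le_A0 beta mu delta rho Hb Hm Hd Hr P A Hs HF).
  assert (Hc : forall t, 0 <= t -> Rabs (delta - beta) * A t <= (beta - mu) / 2).
  { intros s Hs0. destruct (hAA s Hs0). fold L. apply small_mul; [apply Rabs_pos | lra | lra | lra]. }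
  assert (HW := W_decay beta mu delta rho Hb Hm Hd Hr P A Hk Hs HF ltac:(lra) 0 ltac:(lra) Hc t Ht).
  set (lam := lamst beta mu rho) in *.
  assert (Hl0 : 0 < lam) by (unfold lam, lamst; apply Rmin_glb_lt; lra).
  assert (hexp : exp (- lam * t - - lam * 0) <= 1) by (rewrite <- exp_0; apply exp_mono; nra).
  unfold Wf in HW. fold w mm in HW.
  set (X0 := / P 0 - w) in *. set (X := / P t - w) in *.
  assert (W0p : 0 <= X0 * X0 + mm * (A 0 * A 0)) by nra.
  assert (HWt : X * X + mm * (A t * A t) <= X0 * X0 + mm * (A 0 * A 0)).
  { assert (he := exp_pos (- lam * t - - lam * 0)). nra. }
  assert (EX0 : X0 * P 0 = w * (ps - P 0)) by (unfold X0, ps; field; lra).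
  assert (hd2' : (ps - P 0) * (ps - P 0) < d * d).
  { destruct (Rabs_def2 _ _ hP0) as [u1 u2].
    assert (0 < (d - (P 0 - ps)) * (d + (P 0 - ps))) by (apply Rmult_lt_0_compat; lra). nra. }
  assert (hX0 : X0 * X0 <= 4 * w ^ 4 * (d * d)).
  { assert (E1 : X0 * X0 * (P 0 * P 0) = w * w * ((ps - P 0) * (ps - P 0))).
    { transitivity ((X0 * P 0) * (X0 * P 0)). ring. rewrite EX0. ring. }
    assert (hP0sq : ps * ps / 4 <= P 0 * P 0) by nra.
    assert (Eps : ps * ps / 4 * (4 * w ^ 2) = 1).
    { replace (ps * ps / 4 * (4 * w ^ 2)) with ((w * ps) * (w * ps)) by (field). rewrite Hwps. ring. }
    assert (0 <= X0 * X0) by nra.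
    assert (X0 * X0 * (ps * ps / 4) <= w * w * (d * d)).
    { assert (X0 * X0 * (ps * ps / 4) <= X0 * X0 * (P 0 * P 0)) by (apply Rmult_le_compat_l; lra).
      assert (w * w * ((ps - P 0) * (ps - P 0)) <= w * w * (d * d)) by (apply Rmult_le_compat_l; nra).
      lra. }
    assert (X0 * X0 = X0 * X0 * (ps * ps / 4) * (4 * w ^ 2)) by (rewrite Rmult_assoc, Eps; ring).
    assert (0 < 4 * w ^ 2) by (assert (0 < w ^ 2) by (apply pow_lt; lra); lra).
    assert (X0 * X0 * (ps * ps / 4) * (4 * w ^ 2) <= w * w * (d * d) * (4 * w ^ 2))
      by (apply Rmult_le_compat_r; lra).
    replace (4 * w ^ 4 * (d * d)) with (w * w * (d * d) * (4 * w ^ 2)) by ring. lra. }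
  assert (hA0sq : A 0 * A 0 <= d * d) by nra.
  assert (hXt : X * X <= (4 * w ^ 4 + mm) * (d * d)).
  { assert (0 <= mm * (A t * A t)) by (apply Rmult_le_pos; nra).
    assert (mm * (A 0 * A 0) <= mm * (d * d)) by (apply Rmult_le_compat_l; lra). nra. }
  destruct (basic beta mu delta rho Hb Hm Hd Hr P A Hs HF t Ht) as [pt0 [at0 [hS [_ [_ hpt]]]]].
  specialize (hpt ltac:(lra)).
  assert (EP : P t - ps = - (P t / w) * X) by (unfold X, ps; field; lra).
  assert (hPsq : (P t - ps) ^ 2 <= K * (d * d)).
  { rewrite EP. assert (hq : 0 <= P t / w <= 1 / (2 * w)).
    { split. apply Rlt_le, Rdiv_lt_0_compat; lra.
      unfold Rdiv. rewrite Rmult_1_l, Rinv_mult. apply Rmult_le_compat_r. left; apply Rinv_0_lt_compat; lra. lra. }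
    assert (0 <= X * X) by nra.
    assert ((P t / w) * (P t / w) <= (1 / (2 * w)) * (1 / (2 * w))) by nra.
    assert (E : (- (P t / w) * X) ^ 2 = ((P t / w) * (P t / w)) * (X * X)) by ring.
    rewrite E.
    assert ((P t / w) * (P t / w) * (X * X) <= (1 / (2 * w)) * (1 / (2 * w)) * (X * X))
      by (apply Rmult_le_compat_r; lra).
    assert ((1 / (2 * w)) * (1 / (2 * w)) * (X * X) <= (1 / (2 * w)) * (1 / (2 * w)) * ((4 * w ^ 4 + mm) * (d * d))).
    { apply Rmult_le_compat_l. assert (0 < 1 / (2 * w)) by (apply Rdiv_lt_0_compat; lra). nra. exact hXt. }
    replace (K * (d * d)) with ((1 / (2 * w)) * (1 / (2 * w)) * ((4 * w ^ 4 + mm) * (d * d)))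
      by (unfold K; field; lra). lra. }
  destruct (hAA t Ht) as [hAt1 hAt2].
  assert (hAsq : (A t - 0) ^ 2 < d * d) by nra.
  apply dist_lt; auto.
  assert (hdK : d * (K + 2) <= eps).
  { apply Rmult_le_reg_r with (/ (K + 2)). apply Rinv_0_lt_compat; lra.
    rewrite Rmult_assoc, Rinv_r, Rmult_1_r by lra. exact hd3. }
  assert (d < eps) by nra.
  assert (K * (d * d) + d * d < eps ^ 2) by nra.
  lra.
Qed.


Lemma lyap_E0 (beta mu delta rho : R) (Hb : 0 < beta) (Hm : 0 < mu) (Hd : 0 < delta) (Hr : 0 < rho) :
  beta <= mu -> lyap_stable beta mu delta rho 0 0.
Proof.
  intros Hk eps He.
  set (L := Rabs (delta - beta)). assert (hL0 : 0 <= L) by apply Rabs_pos.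
  set (C := exp (L / rho)). assert (HC : 0 < C) by apply exp_pos.
  exists (eps / (C + 2)). split. apply Rdiv_lt_0_compat; lra.
  intros P A Hs HF Hdist t Ht.
  destruct (dist_comp _ _ _ _ _ Hdist) as [hP0 hA0]. rewrite Rminus_0_r in hP0, hA0.
  assert (HF' := HF). destruct HF' as [p00 [a00 hS0]].
  rewrite Rabs_right in hA0, hP0 by lra.
  assert (hPb := P_bound_i beta mu delta rho Hb Hm Hd Hr P A Hk Hs HF t Ht).
  fold L in hPb.
  assert (exp (L / rho * A 0) <= C).
  { apply exp_mono. replace (L / rho) with (L / rho * 1) at 2 by ring.
    apply Rmult_le_compat_l. apply Rmult_le_pos; [lra|left; apply Rinv_0_lt_compat; lra]. lra. }
  destruct (A_le_A0 beta mu delta rho Hb Hm Hd Hr P A Hs HF t Ht) as [a1 a2].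
  destruct (basic beta mu delta rho Hb Hm Hd Hr P A Hs HF t Ht) as [pt0 _].
  set (d := eps / (C + 2)) in *.
  assert (hd : d * (C + 2) = eps) by (unfold d; field; lra).
  assert (hd0 : 0 < d) by (unfold d; apply Rdiv_lt_0_compat; lra).
  assert (hPt : P t <= d * C).
  { assert (P 0 * exp (L / rho * A 0) <= P 0 * C) by (apply Rmult_le_compat_l; lra).
    assert (P 0 * C <= d * C) by (apply Rmult_le_compat_r; lra). lra. }
  apply dist_lt; auto. rewrite !Rminus_0_r.
  assert (P t ^ 2 <= (d * C) ^ 2) by (apply pow_incr; lra).
  assert (A t ^ 2 < d ^ 2) by nra.
  assert ((d * C) ^ 2 + d ^ 2 < eps ^ 2).
  { rewrite <- hd. assert (0 < d * d) by nra. nra. }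
  lra.
Qed.

Lemma saddle0 (beta mu delta rho : R) : mu < beta -> 0 < rho ->
  is_saddle (fP beta mu delta) (fA delta rho) 0 0.
Proof.
  intros Hk Hr.
  assert (J11 : jac11 (fP beta mu delta) 0 0 = beta - mu).
  { unfold jac11. apply is_derive_unique. unfold fP. auto_derive; auto. ring. }
  assert (J12 : jac12 (fP beta mu delta) 0 0 = 0).
  { unfold jac12. apply is_derive_unique. unfold fP. auto_derive; auto. ring. }
  assert (J21 : jac11 (fA delta rho) 0 0 = 0).
  { unfold jac11. apply is_derive_unique. unfold fA. auto_derive; auto. ring. }
  assert (J22 : jac12 (fA delta rho) 0 0 = - rho).
  { unfold jac12. apply is_derive_unique. unfold fA. auto_derive; auto. ring. }
  unfold is_saddle. rewrite J11, J12, J21, J22.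
  split. unfold fP; ring. split. unfold fA; ring.
  exists (beta - mu), (- rho). split. lra. split. lra. split.
  - exists 1, 0. split. left; lra. split; ring.
  - exists 0, 1. split. right; lra. split; ring.
Qed.

Theorem proposition6p12 (alpha gamma mu delta rho beta : R)
  (Halpha : 0 < alpha) (Hgamma : 0 < gamma) (Hmu : 0 < mu)
  (Hdelta : 0 < delta) (Hrho : 0 < rho) (Hbeta : beta = alpha + gamma) :
  (* (i) *)
  (beta <= mu -> glob_asymp_stable beta mu delta rho 0 0)
  /\
  (* (ii) *)
  (mu < beta ->
     (forall P A : R -> R, is_solution beta mu delta rho P A ->
        in_F (P 0) (A 0) -> P 0 = 0 ->
        (forall t, 0 <= t -> P t = 0) /\
        is_lim P p_infty 0 /\ is_lim A p_infty 0)
     /\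
     (forall P A : R -> R, is_solution beta mu delta rho P A ->
        in_F (P 0) (A 0) -> 0 < P 0 ->
        is_lim P p_infty ((1 - mu / beta) / 2) /\ is_lim A p_infty 0)
     /\
     is_saddle (fP beta mu delta) (fA delta rho) 0 0
     /\
     loc_asymp_stable beta mu delta rho ((1 - mu / beta) / 2) 0).
Proof.
  assert (Hb : 0 < beta) by lra.
  split.
  - intros Hk. split. apply lyap_E0; auto.
    intros P A Hs HF. split.
    + apply (P_lim_i beta mu delta rho Hb Hmu Hdelta Hrho P A Hk Hs HF).
    + apply (A_lim beta mu delta rho Hb Hmu Hdelta Hrho P A Hs HF).
  - intros Hk.
    assert (G : forall P A : R -> R, is_solution beta mu delta rho P A ->
        in_F (P 0) (A 0) -> 0 < P 0 ->
        is_lim P p_infty ((1 - mu / beta) / 2) /\ is_lim A p_infty 0).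
    { intros P A Hs HF HP. split.
      apply (P_lim_ii beta mu delta rho Hb Hmu Hdelta Hrho P A Hk Hs HF HP).
      apply (A_lim beta mu delta rho Hb Hmu Hdelta Hrho P A Hs HF). }
    split; [|split; [exact G|split]].
    + intros P A Hs HF H0.
      assert (Z : forall t, 0 <= t -> P t = 0).
      { intros t Ht. destruct (basic beta mu delta rho Hb Hmu Hdelta Hrho P A Hs HF t Ht) as [_ [_ [_ [_ [h _]]]]].
        auto. }
      split; auto. split.
      * apply lim_of. intros eps He. exists 0. intros t Ht. rewrite Z by auto.
        rewrite Rminus_0_r, Rabs_R0. lra.
      * apply (A_lim beta mu delta rho Hb Hmu Hdelta Hrho P A Hs HF).
    + apply saddle0; auto.
    + split. apply lyap_E1; auto.
      exists ((1 - mu / beta) / 2 / 2). split.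
      { assert (mu / beta < 1). { apply Rmult_lt_reg_r with beta; auto. unfold Rdiv.
          rewrite Rmult_assoc, Rinv_l by lra. lra. } lra. }
      intros P A Hs HF Hdist.
      destruct (dist_comp _ _ _ _ _ Hdist) as [hP0 _].
      destruct (Rabs_def2 _ _ hP0) as [u1 u2].
      apply G; auto. lra.
Qed.
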